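(* In $\mathbf{MetCH_{sep}}$, the pushout of a regular monomorphism along any morphism is a regular monomorphism.
   Context: A metric on a set $X$ is a map $d\colon X\times X\to[0,\infty]$ with $d(x,x)=0$ and $d(x,z)\le d(x,y)+d(y,z)$ (not necessarily symmetric, $\infty$ allowed); separated means $d(x,y)=0=d(y,x)$ implies $x=y$. A separated metric compact Hausdorff space is a compact Hausdorff space with a separated metric $d\colon X\times X\to[0,\infty]$ continuous with respect to the upper topology on $[0,\infty]$ (open sets $]u,\infty]$, plus $\emptyset$ and $[0,\infty]$). $\mathbf{MetCH_{sep}}$ has these spaces as objects and continuous non-expansive maps ($d_Y(f(x),f(y))\le d_X(x,y)$) as morphisms. *)

(* Defs.v *)
From HB Require Import structures.
From mathcomp Require Import all_boot all_order all_algebra.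
From mathcomp Require Import all_classical all_reals topology.
Set Implicit Arguments. Unset Strict Implicit. Unset Printing Implicit Defensive.
Import Order.TTheory GRing.Theory Num.Theory.
Local Open Scope classical_set_scope.
Local Open Scope ereal_scope.

(* A separated metric compact Hausdorff space: compact Hausdorff topological
   space X with a (not necessarily symmetric, possibly infinite) separated
   metric d : X -> X -> [0, +oo], continuous w.r.t. the upper topology on
   [0,+oo], i.e. every set {(x,y) | u < d x y} is open in X x X. *)
Record MetCH (R : realType) := MkMetCH {
  mc_space :> topologicalType;
  mc_d : mc_space -> mc_space -> \bar R;
  mc_compact : compact [set: mc_space];
  mc_hausdorff : hausdorff_space mc_space;
  mc_d_ge0 : forall x y, 0 <= mc_d x y;
  mc_d_refl : forall x, mc_d x x = 0;
  mc_d_triangle : forall x y z, mc_d x z <= mc_d x y + mc_d y z;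
  mc_d_sep : forall x y, mc_d x y = 0 -> mc_d y x = 0 -> x = y;
  mc_d_cont : forall u : \bar R,
      open [set p : mc_space * mc_space | u < mc_d p.1 p.2]
}.

Definition is_hom (R : realType) (X Y : MetCH R) (f : X -> Y) : Prop :=
  continuous f /\ forall x y : X, mc_d (f x) (f y) <= mc_d x y.

Definition is_equalizer (R : realType) (A B C : MetCH R)
    (m : A -> B) (g h : B -> C) : Prop :=
  is_hom m /\ is_hom g /\ is_hom h /\ g \o m = h \o m /\
  forall (Z : MetCH R) (k : Z -> B), is_hom k -> g \o k = h \o k ->
    exists u : Z -> A, [/\ is_hom u, m \o u = k &
      forall v : Z -> A, is_hom v -> m \o v = k -> v = u].

Definition regular_mono (R : realType) (A B : MetCH R) (m : A -> B) : Prop :=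
  exists (C : MetCH R) (g h : B -> C), is_equalizer m g h.

Definition is_pushout (R : realType) (A B C P : MetCH R)
    (m : A -> B) (f : A -> C) (f' : B -> P) (m' : C -> P) : Prop :=
  is_hom m /\ is_hom f /\ is_hom f' /\ is_hom m' /\ f' \o m = m' \o f /\
  forall (Z : MetCH R) (p : B -> Z) (q : C -> Z),
    is_hom p -> is_hom q -> p \o m = q \o f ->
    exists u : P -> Z, [/\ is_hom u, u \o f' = p, u \o m' = q &
      forall v : P -> Z, is_hom v -> v \o f' = p -> v \o m' = q -> v = u].

(* Main.v *)
Require Import Defs.
From HB Require Import structures.
From mathcomp Require Import all_boot all_order all_algebra generic_quotient.
From mathcomp Require Import all_classical all_reals topology ereal.
From mathcomp Require Import lra.
Set Implicit Arguments. Unset Strict Implicit. Unset Printing Implicit Defensive.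
Import Order.TTheory GRing.Theory Num.Theory.
Local Open Scope classical_set_scope.
Local Open Scope ereal_scope.
Local Open Scope quotient_scope.
Section Topo.
Context {R : realType}.

Definition lsc {T : topologicalType} (F : T -> \bar R) := forall u, open [set p | u < F p].

Lemma openX' {T U : topologicalType} (A : set T) (B : set U) :
  open A -> open B -> open (A `*` B).
Proof.
move=> oA oB; rewrite openE => -[x y] [/= Ax By].
by exists (A, B) => //=; split; apply: open_nbhs_nbhs; split.
Qed.

Lemma cont_pair {T U V : topologicalType} (f : T -> U) (g : T -> V) :
  continuous f -> continuous g -> continuous (fun x => (f x, g x)).
Proof. by move=> cf cg x; apply: cvg_pair; [exact: cf|exact: cg]. Qed.

Lemma cont_fst {T U : topologicalType} : continuous (@fst T U).
Proof. by move=> p; exact: cvg_fst. Qed.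

Lemma cont_snd {T U : topologicalType} : continuous (@snd T U).
Proof. by move=> p; exact: cvg_snd. Qed.

Lemma prod_hausdorff {T U : topologicalType} :
  hausdorff_space T -> hausdorff_space U -> hausdorff_space (T * U)%type.
Proof.
rewrite !open_hausdorff => hT hU [x1 x2] [y1 y2] xy.
have [e1|n1] := eqVneq x1 y1.
  have n2 : x2 != y2 by apply: contraNneq xy => ->; rewrite e1.
  have [[A B] [/= Ax By] [oA oB AB]] := hU _ _ n2.
  exists (setT `*` A, setT `*` B); first by rewrite !inE in Ax By *.
  split; [exact: openX' openT oA|exact: openX' openT oB|].
  apply/eqP; rewrite /= -subset0 => -[p q] /= [[_ Ap] [_ Bp]].
  by move/eqP: AB => AB; have : (A `&` B) q by []; rewrite AB.
have [[A B] [/= Ax By] [oA oB AB]] := hT _ _ n1.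
exists (A `*` setT, B `*` setT); first by rewrite !inE in Ax By *.
split; [exact: openX' oA openT|exact: openX' oB openT|].
apply/eqP; rewrite /= -subset0 => -[p q] /= [[Ap _] [Bp _]].
by move/eqP: AB => AB; have : (A `&` B) p by []; rewrite AB.
Qed.

Lemma lsc_comp {T U : topologicalType} (g : T -> U) (F : U -> \bar R) :
  continuous g -> lsc F -> lsc (F \o g).
Proof. by move=> cg lF u; exact: (proj1 (continuousP g) cg _ (lF u)). Qed.

Lemma lsc_closed_le {T : topologicalType} (F : T -> \bar R) u :
  lsc F -> closed [set p | F p <= u].
Proof.
move=> lF; have -> : [set p | F p <= u] = ~` [set p | u < F p].
  by apply/seteqP; split => p /=; rewrite leNgt => /negP.
exact: open_closedC.
Qed.

Lemma sep_closed {T : topologicalType} : hausdorff_space T -> compact [set: T] ->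
  forall A B : set T, closed A -> closed B -> A `&` B = set0 ->
  exists U V, [/\ open U, open V, A `<=` U, B `<=` V & U `&` V = set0].
Proof.
move=> hT cT A B cA cB AB.
have nT := compact_normal hT cT.
have : set_nbhs A (~` B).
  apply/set_nbhsP; exists (~` B); split => //; first exact: closed_openC.
  by move=> x Ax Bx; have : (A `&` B) x by []; rewrite AB.
move=> /(nT A cA) [V /set_nbhsP [C [oC AC CV]] clV].
exists C, (~` closure V); split => //.
- exact/closed_openC/closed_closure.
- by move=> x Bx /clV.
- apply/seteqP; split => // x [Cx]; apply; exact/subset_closure/CV.
Qed.

End Topo.
Section Quot.
Context {R : realType} (X : topologicalType) (cX : compact [set: X])
  (hX : hausdorff_space X) (dl : X -> X -> \bar R)
  (dl0 : forall x y, 0 <= dl x y) (dlr : forall x, dl x x = 0)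
  (dlt : forall x y z, dl x z <= dl x y + dl y z)
  (dlc : forall u : \bar R, open [set p : X * X | u < dl p.1 p.2]).

Definition qrel (x y : X) := (dl x y == 0) && (dl y x == 0).

Lemma qrel_refl : reflexive qrel.
Proof. by move=> x; rewrite /qrel dlr eqxx. Qed.

Lemma qrel_sym : symmetric qrel.
Proof. by move=> x y; rewrite /qrel andbC. Qed.

Lemma le0_eq0 (a : \bar R) : 0 <= a -> a <= 0 -> a = 0.
Proof. by move=> h1 h2; apply/eqP; rewrite eq_le h1 h2. Qed.

Lemma qrel_trans : transitive qrel.
Proof.
move=> y x z /andP[/eqP h1 /eqP h2] /andP[/eqP h3 /eqP h4].
apply/andP; split; apply/eqP; apply: le0_eq0 => //.
  by apply: (le_trans (dlt _ y _)); rewrite h1 h3 adde0.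
by apply: (le_trans (dlt _ y _)); rewrite h4 h2 adde0.
Qed.

Definition qerel := EquivRel qrel qrel_refl qrel_sym qrel_trans.
Definition Qt := {eq_quot qerel}.
HB.instance Definition _ := Topological.copy Qt (quotient_topology Qt).
HB.instance Definition _ := Quotient.on Qt.

Definition qpi : X -> Qt := \pi_Qt.

Lemma qpiP x y : qpi x = qpi y <-> qrel x y.
Proof. by split => [/eqmodP|h]; [|apply/eqmodP]. Qed.

Lemma qrel_repr x : qrel (repr (qpi x)) x.
Proof. by apply/qpiP; rewrite /qpi reprK. Qed.

Lemma qpi_surj (q : Qt) : qpi (repr q) = q.
Proof. exact: reprK. Qed.

Lemma dl_compat x x' y y' : qrel x x' -> qrel y y' -> dl x y = dl x' y'.
Proof.
move=> /andP[/eqP h1 /eqP h2] /andP[/eqP h3 /eqP h4]; apply/eqP; rewrite eq_le.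
apply/andP; split.
  apply: (le_trans (dlt _ x' _)); rewrite h1 add0e.
  by apply: (le_trans (dlt _ y' _)); rewrite h4 adde0.
apply: (le_trans (dlt _ x _)); rewrite h2 add0e.
by apply: (le_trans (dlt _ y _)); rewrite h3 adde0.
Qed.

Definition qd (a b : Qt) := dl (repr a) (repr b).

Lemma qd_pi x y : qd (qpi x) (qpi y) = dl x y.
Proof. exact: dl_compat (qrel_repr x) (qrel_repr y). Qed.

Lemma qpi_cont : continuous qpi.
Proof. exact: pi_continuous. Qed.

Lemma qopen (U : set Qt) : open U <-> open (qpi @^-1` U).
Proof. by []. Qed.

Lemma qcont_of (Y : topologicalType) (k : Qt -> Y) :
  continuous (k \o qpi) -> continuous k.
Proof.
move=> ck; apply/continuousP => W oW; apply/qopen.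
exact: (proj1 (continuousP _) ck W oW).
Qed.

Lemma Qt_compact : compact [set: Qt].
Proof.
have -> : [set: Qt] = qpi @` [set: X].
  by apply/seteqP; split => q // _; exists (repr q) => //; exact: qpi_surj.
by apply: continuous_compact => //; exact/continuous_subspaceT/qpi_cont.
Qed.

Lemma dl_lsc_l x : lsc (dl x).
Proof.
move=> u; have := lsc_comp (cont_pair (@cst_continuous X X x) (fun z => cvg_id)) dlc u.
by [].
Qed.

Lemma dl_lsc_r y : lsc (dl ^~ y).
Proof.
move=> u; have := lsc_comp (cont_pair (fun z => cvg_id) (@cst_continuous X X y)) dlc u.
by [].
Qed.

Lemma qclass_closed x : closed [set z | qrel x z].
Proof.
have -> : [set z | qrel x z] = [set z | dl x z <= 0] `&` [set z | dl z x <= 0].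
  apply/seteqP; split => z /=.
    by case/andP => /eqP -> /eqP ->.
  by case=> h1 h2; apply/andP; split; apply/eqP; apply: le0_eq0.
by apply: closedI; apply: lsc_closed_le; [exact: dl_lsc_l|exact: dl_lsc_r].
Qed.

Lemma qrel_closed : closed [set p : X * X | qrel p.1 p.2].
Proof.
have -> : [set p : X * X | qrel p.1 p.2] =
    [set p | dl p.1 p.2 <= 0] `&` [set p | dl p.2 p.1 <= 0].
  apply/seteqP; split => z /=.
    by case/andP => /eqP -> /eqP ->.
  by case=> h1 h2; apply/andP; split; apply/eqP; apply: le0_eq0.
apply: closedI; apply: lsc_closed_le => //.
exact: (lsc_comp (@swap_continuous X X) dlc).
Qed.

Lemma XX_compact : compact [set: (X * X)%type].
Proof. by rewrite -setXTT; exact: compact_setX. Qed.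

Lemma sat_open (U0 : set X) : open U0 ->
  open [set z | forall w, qrel z w -> U0 w].
Proof.
move=> oU0.
have -> : [set z | forall w, qrel z w -> U0 w] =
    ~` (fst @` ([set p : X * X | qrel p.1 p.2] `&` [set p | ~ U0 p.2])).
  apply/seteqP; split => z /=.
    by move=> h [[a b] [/= zab nU] az]; subst a; exact: nU (h _ zab).
  move=> h w zw; apply: contrapT => nU; apply: h; exists (z, w) => //.
apply: closed_openC; apply: compact_closed; first exact: hX.
apply: continuous_compact; first exact/continuous_subspaceT/cont_fst.
apply: (subclosed_compact _ XX_compact) => //.
apply: closedI; first exact: qrel_closed.
have -> : [set p : X * X | ~ U0 p.2] = ~` (snd @^-1` U0) by [].
apply: open_closedC; exact: (proj1 (continuousP _) cont_snd _ oU0).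
Qed.

Lemma Qt_hausdorff : hausdorff_space Qt.
Proof.
rewrite open_hausdorff => q1 q2 q12.
set x := repr q1; set y := repr q2.
have nxy : ~ qrel x y.
  move=> /qpiP; rewrite /x /y !qpi_surj => e; by rewrite e eqxx in q12.
have KK : [set z | qrel x z] `&` [set z | qrel y z] = set0.
  apply/seteqP; split => // z [/= xz yz]; apply: nxy.
  by apply: qrel_trans xz _; rewrite qrel_sym.
have [U0 [V0 [oU0 oV0 KU KV UV]]] := sep_closed hX cX (@qclass_closed x)
  (@qclass_closed y) KK.
- set U := [set z | forall w, qrel z w -> U0 w].
  set V := [set z | forall w, qrel z w -> V0 w].
  have satU z z' : qrel z z' -> U z -> U z'.
    by move=> zz' Uz w z'w; apply: Uz; exact: qrel_trans zz' z'w.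
  have satV z z' : qrel z z' -> V z -> V z'.
    by move=> zz' Vz w z'w; apply: Vz; exact: qrel_trans zz' z'w.
  have Ux : U x by move=> w xw; exact: KU.
  have Vy : V y by move=> w yw; exact: KV.
  exists ([set q | U (repr q)], [set q | V (repr q)]) => /=.
    by rewrite !inE.
  split.
  + apply/qopen; have -> : qpi @^-1` [set q | U (repr q)] = U.
      apply/seteqP; split => z /=; first by apply: satU; exact: qrel_repr.
      by apply: satU; rewrite qrel_sym; exact: qrel_repr.
    exact: sat_open.
  + apply/qopen; have -> : qpi @^-1` [set q | V (repr q)] = V.
      apply/seteqP; split => z /=; first by apply: satV; exact: qrel_repr.
      by apply: satV; rewrite qrel_sym; exact: qrel_repr.
    exact: sat_open.
  + apply/eqP; rewrite /= -subset0 => q /= [Uq Vq].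
    have : (U0 `&` V0) (repr q) by split; [exact: Uq (qrel_refl _)|exact: Vq (qrel_refl _)].
    by rewrite UV.
Qed.

Lemma qd_lsc (u : \bar R) : open [set p : Qt * Qt | u < qd p.1 p.2].
Proof.
have -> : [set p : Qt * Qt | u < qd p.1 p.2] =
    ~` ((fun p : X * X => (qpi p.1, qpi p.2)) @` [set p | dl p.1 p.2 <= u]).
  apply/seteqP; split => -[q1 q2] /=.
    move=> h [[a b] /= hab [e1 e2]]; subst q1 q2.
    by move: h; rewrite qd_pi ltNge hab.
  move=> h; rewrite ltNge; apply/negP => hle; apply: h.
  by exists (repr q1, repr q2) => //=; rewrite !qpi_surj.
apply: closed_openC; apply: compact_closed.
  exact: prod_hausdorff Qt_hausdorff Qt_hausdorff.
apply: continuous_compact.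
  apply/continuous_subspaceT; apply: cont_pair.
    by move=> p; apply: continuous_comp; [exact: cont_fst|exact: qpi_cont].
  by move=> p; apply: continuous_comp; [exact: cont_snd|exact: qpi_cont].
apply: (subclosed_compact _ XX_compact) => //.
exact: lsc_closed_le.
Qed.

Definition QMet : MetCH R.
refine (@MkMetCH R Qt qd Qt_compact Qt_hausdorff _ _ _ _ qd_lsc).
- by move=> a b; exact: dl0.
- by move=> a; exact: dlr.
- by move=> a b c; exact: dlt.
- move=> a b h1 h2; rewrite -(qpi_surj a) -(qpi_surj b); apply/qpiP.
  by rewrite /qrel; apply/andP; split; apply/eqP.
Defined.

End Quot.
Section Reg.
Context {R : realType}.

Lemma open_const {T : topologicalType} (P : Prop) : open [set _ : T | P].
Proof.
case: (pselect P) => hP.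
  by rewrite (_ : [set _ | P] = setT); [exact: openT|apply/seteqP; split].
by rewrite (_ : [set _ | P] = set0); [exact: open0|apply/seteqP; split].
Qed.

Lemma hom_cont (X Y : MetCH R) (f : X -> Y) : is_hom f -> continuous f.
Proof. by case. Qed.

Lemma hom_le (X Y : MetCH R) (f : X -> Y) : is_hom f ->
  forall x y, mc_d (f x) (f y) <= mc_d x y.
Proof. by case. Qed.

Lemma cst_hom (X Y : MetCH R) (y : Y) : is_hom (fun _ : X => y).
Proof.
split; first exact: cst_continuous.
by move=> a b; rewrite mc_d_refl; exact: mc_d_ge0.
Qed.

Lemma d_cont_comp (X Y : MetCH R) (f : X -> Y) : continuous f ->
  forall u : \bar R, open [set p : X * X | u < mc_d (f p.1) (f p.2)].
Proof.
move=> cf u.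
have := lsc_comp (F := fun p : Y * Y => mc_d p.1 p.2)
  (cont_pair (fun p => continuous_comp (@cont_fst X X p) (cf _))
             (fun p => continuous_comp (@cont_snd X X p) (cf _))) (@mc_d_cont R Y) u.
by [].
Qed.

Lemma reg_props (A B : MetCH R) (m : A -> B) : regular_mono m ->
  (forall a1 a2, m a1 = m a2 -> a1 = a2) /\
  (forall a1 a2, mc_d (m a1) (m a2) = mc_d a1 a2).
Proof.
case=> D [g [h [hm [hg [hh [gm univ]]]]]].
have gmx a : g (m a) = h (m a) by have := congr1 (fun F => F a) gm.
have inj : forall a1 a2, m a1 = m a2 -> a1 = a2.
  move=> a1 a2 e.
  pose dl := fun _ _ : A => (0 : \bar R).
  have dl0 : forall x y, 0 <= dl x y by [].
  have dlr : forall x, dl x x = 0 by [].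
  have dlt : forall x y z, dl x z <= dl x y + dl y z by move=> *; rewrite /dl adde0.
  have dlc : forall u, open [set p : A * A | u < dl p.1 p.2] by move=> u; exact: (@open_const _ (u < 0)).
  pose Z := QMet (@mc_compact R A) (@mc_hausdorff R A) dl0 dlr dlt dlc.
  have hk : is_hom (fun _ : Z => m a1) by exact: cst_hom.
  have ek : g \o (fun _ : Z => m a1) = h \o (fun _ : Z => m a1).
    by apply: funext => z; exact: gmx.
  have [u [hu mu uniq]] := univ Z _ hk ek.
  have e1 := uniq (fun _ : Z => a1) (cst_hom _ _) erefl.
  have e2 := uniq (fun _ : Z => a2) (cst_hom _ _) (funext (fun z => esym e)).
  have := congr1 (fun F => F (qpi dl0 dlr dlt a1)) (etrans e1 (esym e2)).
  by [].
split => // a1 a2; apply/eqP; rewrite eq_le; apply/andP; split;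
  first exact: (hom_le hm).
pose dl := fun x y : A => mc_d (m x) (m y).
have dl0 : forall x y, 0 <= dl x y by move=> *; exact: mc_d_ge0.
have dlr : forall x, dl x x = 0 by move=> *; exact: mc_d_refl.
have dlt : forall x y z, dl x z <= dl x y + dl y z by move=> *; exact: mc_d_triangle.
have dlc : forall u, open [set p : A * A | u < dl p.1 p.2].
  exact: d_cont_comp (hom_cont hm).
pose Z := QMet (@mc_compact R A) (@mc_hausdorff R A) dl0 dlr dlt dlc.
pose k := fun q : Z => m (repr q).
have kpi : forall x, k (qpi dl0 dlr dlt x) = m x.
  move=> x; have /andP[/eqP h1 /eqP h2] := qrel_repr dl0 dlr dlt x.
  exact: mc_d_sep h1 h2.
have hk : is_hom k.
  split; last by move=> x y; exact: lexx.
  apply: qcont_of; rewrite (_ : k \o _ = m); first exact: hom_cont hm.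
  by apply: funext => x; exact: kpi.
have ek : g \o k = h \o k by apply: funext => z; exact: gmx.
have [u [hu mu uniq]] := univ Z _ hk ek.
have ua : forall x, u (qpi dl0 dlr dlt x) = x.
  by move=> x; apply: inj; rewrite -(kpi x); have := congr1 (fun F => F (qpi dl0 dlr dlt x)) mu.
rewrite -{1}(ua a1) -{1}(ua a2).
apply: le_trans (hom_le hu _ _) _.
by rewrite /= qd_pi.
Qed.

End Reg.
Section Inf.
Context {R : realType}.

Lemma inf_ge0 (S : set (\bar R)) : (forall s, S s -> 0 <= s) -> 0 <= ereal_inf S.
Proof. by move=> S0; apply/ereal_infP. Qed.

Lemma le_inf_addl (S : set (\bar R)) (t L : \bar R) : (forall s, S s -> 0 <= s) ->
  0 <= t -> (forall s, S s -> L <= t + s) -> L <= t + ereal_inf S.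
Proof.
move=> S0 t0 h; have i0 := inf_ge0 S0.
case: t t0 h => [r r0 h|_ _|//].
  rewrite -leeBlDl //; apply/ereal_infP => s Ss; rewrite leeBlDl //; exact: h.
rewrite addye ?leey //; by case: (ereal_inf S) i0.
Qed.

Lemma le_inf_addr (S : set (\bar R)) (t L : \bar R) : (forall s, S s -> 0 <= s) ->
  0 <= t -> (forall s, S s -> L <= s + t) -> L <= ereal_inf S + t.
Proof.
move=> S0 t0 h; rewrite addeC; apply: le_inf_addl => // s Ss; rewrite addeC; exact: h.
Qed.

Lemma le_min_add (a b t L : \bar R) : L <= a + t -> L <= b + t -> L <= mine a b + t.
Proof. by have [ab|ba] := leP a b. Qed.

Lemma le_add_min (a b t L : \bar R) : L <= t + a -> L <= t + b -> L <= t + mine a b.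
Proof. by have [ab|ba] := leP a b. Qed.

Lemma inf_lsc (Y K : topologicalType) (cY : compact [set: Y]) (hY : hausdorff_space Y)
  (cK : compact [set: K]) (F : Y -> K -> \bar R) (F0 : forall y k, 0 <= F y k)
  (Fl : lsc (fun p : Y * K => F p.1 p.2)) :
  lsc (fun y => ereal_inf [set F y k | k in [set: K]]).
Proof.
have key : forall v : R, open [set y | forall k, v%:E < F y k].
  move=> v.
  have -> : [set y | forall k, v%:E < F y k] =
      ~` (fst @` [set p : Y * K | F p.1 p.2 <= v%:E]).
    apply/seteqP; split => y /=.
      by move=> h [[a b] /= hab ea]; subst a; move: (h b); rewrite ltNge hab.
    move=> h k; rewrite ltNge; apply/negP => hk; apply: h; by exists (y, k).
  apply: closed_openC; apply: compact_closed => //.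
  apply: continuous_compact; first exact/continuous_subspaceT/cont_fst.
  apply: (subclosed_compact _ (_ : compact [set: (Y * K)%type])) => //.
    exact: lsc_closed_le.
  by rewrite -setXTT; exact: compact_setX.
have i0 y : 0 <= ereal_inf [set F y k | k in [set: K]].
  by apply: inf_ge0 => _ [k _ <-].
move=> u; case: u => [r| |].
- have -> : [set y | r%:E < ereal_inf [set F y k | k in [set: K]]] =
      \bigcup_(v in [set v : R | (r < v)%R]) [set y | forall k, v%:E < F y k].
    apply/seteqP; split => y /=.
      move=> h.
      case E: (ereal_inf [set F y k | k in [set: K]]) h (i0 y) => [s| |] //= h _.
        exists ((r + s) / 2)%R; first by have := midf_lt h; case.
        move=> k; apply: (lt_le_trans (y := s%:E)).
          by rewrite lte_fin; have := midf_lt h; case.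
        by rewrite -E; apply: ereal_inf_lbound; exists k.
      exists (r + 1)%R; first by rewrite /= ltrDl.
      move=> k; have : +oo <= F y k by rewrite -E; apply: ereal_inf_lbound; exists k.
      by rewrite leye_eq => /eqP ->; rewrite ltey.
    move=> [v /= rv h]; apply: (lt_le_trans (y := v%:E)); first by rewrite lte_fin.
    by apply/ereal_infP => _ [k _ <-]; apply: ltW.
  by apply: bigcup_open => v _; exact: key.
- rewrite (_ : [set _ | _] = set0); first exact: open0.
  by apply/seteqP; split => // y /=; rewrite ltNge leey.
- rewrite (_ : [set _ | _] = setT); first exact: openT.
  apply/seteqP; split => // y _ /=; apply: (lt_le_trans _ (i0 y)); exact: ltNy0.
Qed.

Lemma inf_attained (K : topologicalType) (cK : compact [set: K]) (G : K -> \bar R)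
  (G0 : forall k, 0 <= G k) (Gl : lsc G) :
  ereal_inf [set G k | k in [set: K]] = 0 -> exists k, G k = 0.
Proof.
move=> h0.
pose Fl := filter_from [set e : R | (0 < e)%R] (fun e => [set k | G k <= e%:E]).
have FF : Filter Fl.
  apply: filter_from_filter; first by exists 1%R => /=.
  move=> e1 e2 /= e10 e20; exists (Num.min e1 e2); first by rewrite /= lt_min e10 e20.
  move=> k /= hk; split.
    by apply: (le_trans hk); rewrite lee_fin ge_min lexx.
  by apply: (le_trans hk); rewrite lee_fin ge_min lexx orbT.
have PF : ProperFilter Fl.
  apply: filter_from_proper => e /= e0.
  have : ereal_inf [set G k | k in [set: K]] < e%:E by rewrite h0 lte_fin.
  by case/ereal_inf_lt => _ [k _ <-] /ltW hk; exists k.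
have [k [_ clk]] := cK Fl PF (filterT).
exists k; apply: le0_eq0 => //.
apply/lee_addgt0Pr => e e0; rewrite add0e.
have : closed [set k | G k <= e%:E] by exact: lsc_closed_le.
apply => B nB; apply: clk => //; by exists e.
Qed.

End Inf.
Section LscAdd.
Context {R : realType}.

Lemma ar1 (a b r : R) : (r < a + b)%R -> [/\ (a - (a+b-r)/2 < a)%R,
  (b - (a+b-r)/2 < b)%R & (r <= a - (a+b-r)/2 + (b - (a+b-r)/2))%R].
Proof. by move=> h; split; lra. Qed.

Lemma ar2 (a r : R) : [/\ (a - 1 < a)%R & (r <= a - 1 + (r - a + 1))%R].
Proof. by split; lra. Qed.

Lemma ar3 (b r : R) : [/\ (b - 1 < b)%R & (r <= r - b + 1 + (b - 1))%R].
Proof. by split; lra. Qed.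

Lemma ar4 : (-1 < 0 :> R)%R.
Proof. lra. Qed.

Lemma lsc_add (T : topologicalType) (f g : T -> \bar R) :
  (forall x, 0 <= f x) -> (forall x, 0 <= g x) -> lsc f -> lsc g ->
  lsc (fun x => f x + g x).
Proof.
move=> f0 g0 lf lg u; rewrite openE => x /= hx.
suff [v [w [vf wg uvw]]] : exists v w : R,
    [/\ v%:E < f x, w%:E < g x & u <= (v + w)%:E].
  apply: (@filterS _ _ _ ([set p | v%:E < f p] `&` [set p | w%:E < g p])).
    move=> p [/= hp1 hp2]; apply: le_lt_trans uvw _; rewrite EFinD; exact: lteD.
  by apply: open_nbhs_nbhs; split; [exact: openI|].
case: u hx => [r| |] hx.
- move: (f0 x) (g0 x) hx; case: (f x) => [a| |] //; case: (g x) => [b| |] //.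
  + move=> _ _; rewrite -EFinD lte_fin => h.
    exists (a - (a + b - r) / 2)%R, (b - (a + b - r) / 2)%R.
    by rewrite !lte_fin lee_fin; apply: ar1.
  + move=> _ _ _; exists (a - 1)%R, (r - a + 1)%R.
    by rewrite !lte_fin lee_fin ltey; have [? ?] := ar2 a r; split.
  + move=> _ _ _; exists (r - b + 1)%R, (b - 1)%R.
    by rewrite !lte_fin lee_fin ltey; have [? ?] := ar3 b r; split.
  + move=> _ _ _; exists r, 0%R.
    by split; rewrite ?ltey ?lee_fin ?addr0.
- by move: hx; rewrite ltNge leey.
- exists (-1)%R, (-1)%R; split; last exact: leNye.
    by apply: (lt_le_trans _ (f0 x)); rewrite lte_fin; exact: ar4.
  by apply: (lt_le_trans _ (g0 x)); rewrite lte_fin; exact: ar4.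
Qed.

End LscAdd.
Section PO.
Context {R : realType} (A : MetCH R) (Y : bool -> MetCH R) (io : forall i, A -> Y i)
  (ioc : forall i, continuous (io i))
  (Hio : forall a a', mc_d (io false a) (io false a') <= mc_d (io true a) (io true a')).

Definition XT (i : bool) : topologicalType := mc_space (Y i).
Local Notation XS := {i : bool & XT i}.

Definition dir (x y : XS) : \bar R :=
  match x, y with
  | existT i a, existT j b =>
    (match i as i0, j as j0 return (XT i0 -> XT j0 -> \bar R) with
     | true, true => fun a b => @mc_d R (Y true) a b
     | false, false => fun a b => @mc_d R (Y false) a b
     | _, _ => fun _ _ => +oo
     end) a b
  end.

Definition dL (x : XS) (a : A) : \bar R := @mc_d R (Y (projT1 x)) (projT2 x) (io (projT1 x) a).
Definition dR (a : A) (y : XS) : \bar R := @mc_d R (Y (projT1 y)) (io (projT1 y) a) (projT2 y).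
Definition dM (a a' : A) : \bar R := mc_d (io false a) (io false a').
Definition Fc (x y : XS) (p : (A * A)%type) := dL x p.1 + dM p.1 p.2 + dR p.2 y.
Definition Ii (x y : XS) := ereal_inf [set Fc x y p | p in [set: (A * A)%type]].
Definition delta (x y : XS) := mine (dir x y) (Ii x y).

Lemma ge0_nNy (x : \bar R) : 0 <= x -> x != -oo.
Proof. by case: x. Qed.

Lemma dir_ge0 x y : 0 <= dir x y.
Proof. by case: x => [[] a]; case: y => [[] b] /=; rewrite ?mc_d_ge0 ?leey. Qed.

Lemma dL_ge0 x a : 0 <= dL x a. Proof. exact: mc_d_ge0. Qed.
Lemma dR_ge0 a x : 0 <= dR a x. Proof. exact: mc_d_ge0. Qed.
Lemma dM_ge0 a a' : 0 <= dM a a'. Proof. exact: mc_d_ge0. Qed.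

Lemma Fc_ge0 x y p : 0 <= Fc x y p.
Proof. by rewrite /Fc; rewrite !adde_ge0 ?dL_ge0 ?dR_ge0 ?dM_ge0. Qed.

Lemma Ii_ge0 x y : 0 <= Ii x y.
Proof. by apply: inf_ge0 => _ [p _ <-]; exact: Fc_ge0. Qed.

Lemma Ii_le x y p : Ii x y <= Fc x y p.
Proof. by apply: ereal_inf_lbound; exists p. Qed.

Lemma Ii_elem_ge0 x y : forall s, [set Fc x y p | p in [set: (A * A)%type]] s -> 0 <= s.
Proof. by move=> _ [p _ <-]; exact: Fc_ge0. Qed.

Lemma delta_ge0 x y : 0 <= delta x y.
Proof. by rewrite /delta le_min dir_ge0 Ii_ge0. Qed.

Lemma dir_refl x : dir x x = 0.
Proof. by case: x => [[] a] /=; rewrite mc_d_refl. Qed.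

Lemma delta_refl x : delta x x = 0.
Proof.
apply: le0_eq0; first exact: delta_ge0.
by rewrite /delta ge_min dir_refl lexx.
Qed.

Lemma pinfD (x : \bar R) : 0 <= x -> +oo + x = +oo.
Proof. by move=> /ge0_nNy; exact: addye. Qed.
Lemma addpinf (x : \bar R) : 0 <= x -> x + +oo = +oo.
Proof. by move=> /ge0_nNy; exact: addey. Qed.

Lemma dir_tri x y z : dir x z <= dir x y + dir y z.
Proof.
case: x => [[] a]; case: y => [[] b]; case: z => [[] c] /=;
  rewrite ?mc_d_triangle ?pinfD ?addpinf ?leey ?mc_d_ge0 //.
Qed.

Lemma dL_tri x y a : dL x a <= dir x y + dL y a.
Proof.
case: x => [[] a0]; case: y => [[] b] /=; rewrite /dL /=;
  rewrite ?mc_d_triangle ?pinfD ?leey ?mc_d_ge0 //.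
Qed.

Lemma dR_tri a y z : dR a z <= dR a y + dir y z.
Proof.
case: z => [[] c]; case: y => [[] b] /=; rewrite /dR /=;
  rewrite ?mc_d_triangle ?addpinf ?leey ?mc_d_ge0 //.
Qed.

Lemma dM_mid a y a' : dM a a' <= dR a y + dL y a'.
Proof.
case: y => [[] b]; rewrite /dM /dR /dL /=; last exact: mc_d_triangle.
apply: le_trans (Hio a a') _; exact: mc_d_triangle.
Qed.

Lemma dM_tri a b c : dM a c <= dM a b + dM b c.
Proof. exact: mc_d_triangle. Qed.

Lemma delta_tri x y z : delta x z <= delta x y + delta y z.
Proof.
rewrite /delta; apply: le_min_add; apply: le_add_min.
- by rewrite ge_min dir_tri.
- apply: le_inf_addl; [exact: Ii_elem_ge0|exact: dir_ge0|].
  move=> _ [p _ <-]; rewrite ge_min; apply/orP; right.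
  apply: (le_trans (Ii_le x z p)); rewrite /Fc !addeA.
  by apply: leeD2r; apply: leeD2r; exact: dL_tri.
- apply: le_inf_addr; [exact: Ii_elem_ge0|exact: dir_ge0|].
  move=> _ [p _ <-]; rewrite ge_min; apply/orP; right.
  apply: (le_trans (Ii_le x z p)); rewrite /Fc -!addeA.
  by apply: leeD2l; apply: leeD2l; exact: dR_tri.
- apply: le_inf_addr; [exact: Ii_elem_ge0|exact: Ii_ge0|].
  move=> _ [p _ <-]; apply: le_inf_addl; [exact: Ii_elem_ge0|exact: Fc_ge0|].
  move=> _ [q _ <-]; rewrite ge_min; apply/orP; right.
  apply: (le_trans (Ii_le x z (p.1, q.2))); rewrite /Fc /=.
  apply: (le_trans (y := dL x p.1 + (dM p.1 p.2 + (dR p.2 y + dL y q.1 + dM q.1 q.2))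
     + dR q.2 z)); last by rewrite !addeA.
  apply: leeD2r; apply: leeD2l.
  apply: (le_trans (dM_tri _ p.2 _)); apply: leeD2l.
  apply: (le_trans (dM_tri _ q.1 _)); apply: leeD2r; exact: dM_mid.
Qed.

Lemma open_sigT_l (T : topologicalType) (S : set (XS * T)%type) :
  (forall i, open [set p : (XT i * T)%type | S (existT _ i p.1, p.2)]) -> open S.
Proof.
move=> h; rewrite openE => -[[i y] t] Sx.
have : open_nbhs (y, t) [set p : (XT i * T)%type | S (existT _ i p.1, p.2)].
  by split => //; exact: h.
move=> /open_nbhs_nbhs [[P Q] /= [Py Qt] PQS].
exists (existT _ i @` P, Q) => /=; first by split => //; exact: existT_nbhs.
by move=> -[z w] /= [[y' Py' <-] Qw]; exact: (PQS (y', w)).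
Qed.

Lemma open_sigT_r (T : topologicalType) (S : set (T * XS)%type) :
  (forall i, open [set p : (T * XT i)%type | S (p.1, existT _ i p.2)]) -> open S.
Proof.
move=> h; rewrite openE => -[t [i y]] Sx.
have : open_nbhs (t, y) [set p : (T * XT i)%type | S (p.1, existT _ i p.2)].
  by split => //; exact: h.
move=> /open_nbhs_nbhs [[P Q] /= [Pt Qy] PQS].
exists (P, existT _ i @` Q) => /=; first by split => //; exact: existT_nbhs.
by move=> -[w z] /= [Pw [y' Qy' <-]]; exact: (PQS (w, y')).
Qed.

Lemma open_sigT2 (S : set (XS * XS)%type) :
  (forall i j, open [set p : (XT i * XT j)%type | S (existT _ i p.1, existT _ j p.2)]) ->
  open S.
Proof.
move=> h; rewrite openE => -[[i y] [j z]] Sx.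
have : open_nbhs (y, z) [set p : (XT i * XT j)%type | S (existT _ i p.1, existT _ j p.2)].
  by split => //; exact: h.
move=> /open_nbhs_nbhs [[P Q] /= [Py Qz] PQS].
exists (existT _ i @` P, existT _ j @` Q) => /=.
  by split; exact: existT_nbhs.
by move=> -[w1 w2] /= [[y' Py' <-] [z' Qz' <-]]; exact: (PQS (y', z')).
Qed.

Lemma dir_lsc : lsc (fun p : (XS * XS)%type => dir p.1 p.2).
Proof.
move=> u; apply: open_sigT2 => i j; case: i; case: j => /=;
  (exact: mc_d_cont || exact: (@open_const _ (u < +oo))).
Qed.

Lemma dL_lsc : lsc (fun p : (XS * A)%type => dL p.1 p.2).
Proof.
move=> u; apply: open_sigT_l => i.
have := (lsc_comp (F := fun q : (Y i * Y i)%type => mc_d q.1 q.2)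
  (cont_pair (@cont_fst (XT i) A) (fun p => continuous_comp (@cont_snd (XT i) A p) (@ioc i _)))
  (@mc_d_cont R (Y i)) u).
by [].
Qed.

Lemma dR_lsc : lsc (fun p : (A * XS)%type => dR p.1 p.2).
Proof.
move=> u; apply: open_sigT_r => i.
have := (lsc_comp (F := fun q : (Y i * Y i)%type => mc_d q.1 q.2)
  (cont_pair (fun p => continuous_comp (@cont_fst A (XT i) p) (@ioc i _)) (@cont_snd A (XT i)))
  (@mc_d_cont R (Y i)) u).
by [].
Qed.

Lemma dM_lsc : lsc (fun p : (A * A)%type => dM p.1 p.2).
Proof. exact: d_cont_comp (@ioc false). Qed.

Lemma Fc_lsc : lsc (fun w : ((XS * XS) * (A * A))%type => Fc w.1.1 w.1.2 w.2).
Proof.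
have c11 : continuous (fun w : ((XS * XS) * (A * A))%type => w.1.1).
  by move=> w; apply: continuous_comp; [exact: cont_fst|exact: cont_fst].
have c12 : continuous (fun w : ((XS * XS) * (A * A))%type => w.1.2).
  by move=> w; apply: continuous_comp; [exact: cont_fst|exact: cont_snd].
have c21 : continuous (fun w : ((XS * XS) * (A * A))%type => w.2.1).
  by move=> w; apply: continuous_comp; [exact: cont_snd|exact: cont_fst].
have c22 : continuous (fun w : ((XS * XS) * (A * A))%type => w.2.2).
  by move=> w; apply: continuous_comp; [exact: cont_snd|exact: cont_snd].
apply: lsc_add.
- by move=> w; apply: adde_ge0; [exact: dL_ge0|exact: dM_ge0].
- by move=> w; exact: dR_ge0.
- apply: lsc_add; [by move=> w; exact: dL_ge0|by move=> w; exact: dM_ge0| |].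
    exact: (lsc_comp (cont_pair c11 c21) dL_lsc).
  exact: (lsc_comp (cont_pair c21 c22) dM_lsc).
- exact: (lsc_comp (cont_pair c22 c12) dR_lsc).
Qed.

Lemma XS_compact : compact [set: XS].
Proof. apply: sigT_compact; [exact: finite_finset|move=> i; exact: mc_compact]. Qed.

Lemma XS_hausdorff : hausdorff_space XS.
Proof. apply: sigT_hausdorff => i; exact: mc_hausdorff. Qed.

Lemma Ii_lsc : lsc (fun q : (XS * XS)%type => Ii q.1 q.2).
Proof.
apply: (@inf_lsc R (XS * XS)%type (A * A)%type _ _ _ (fun q p => Fc q.1 q.2 p)).
- by rewrite -setXTT; apply: compact_setX; exact: XS_compact.
- by apply: prod_hausdorff; exact: XS_hausdorff.
- by rewrite -setXTT; apply: compact_setX; exact: mc_compact.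
- by move=> *; exact: Fc_ge0.
- exact: Fc_lsc.
Qed.

Lemma delta_lsc (u : \bar R) : open [set p : (XS * XS)%type | u < delta p.1 p.2].
Proof.
have -> : [set p : (XS * XS)%type | u < delta p.1 p.2] =
    [set p | u < dir p.1 p.2] `&` [set p | u < Ii p.1 p.2].
  by apply/seteqP; split => p /=; rewrite /delta lt_min => /andP.
by apply: openI; [exact: dir_lsc|exact: Ii_lsc].
Qed.

Definition QPO : MetCH R := QMet XS_compact XS_hausdorff delta_ge0 delta_refl delta_tri delta_lsc.

Definition inj (i : bool) (y : Y i) : QPO :=
  qpi delta_ge0 delta_refl delta_tri (existT XT i y).

Lemma inj_d i (y y' : Y i) : mc_d (inj y) (inj y') = delta (existT XT i y) (existT XT i y').
Proof. exact: qd_pi. Qed.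

Lemma inj_hom i : is_hom (@inj i).
Proof.
split.
  move=> y; apply: continuous_comp; first exact: existT_continuous.
  exact: qpi_cont.
move=> y y'; rewrite inj_d /delta ge_min; apply/orP; left.
by case: i y y' => y y' /=.
Qed.

Lemma glue a : inj (io true a) = inj (io false a).
Proof.
apply/qpiP; rewrite /qrel; apply/andP; split; apply/eqP; apply: le0_eq0;
  (try exact: delta_ge0); rewrite /delta ge_min; apply/orP; right;
  apply: (le_trans (Ii_le _ _ (a, a))); by rewrite /Fc /dL /dR /dM /= !mc_d_refl !adde0.
Qed.

Lemma inj_false_d (c c' : Y false) : mc_d (inj c) (inj c') = mc_d c c'.
Proof.
rewrite inj_d /delta min_l //=.
apply/ereal_infP => _ [p _ <-]; rewrite /Fc /dL /dR /dM /=.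
apply: (le_trans (mc_d_triangle _ (io false p.1) _)); rewrite -addeA; apply: leeD2l.
exact: mc_d_triangle.
Qed.

Lemma inj_tf (y0 : Y true) (y1 : Y false) : inj y0 = inj y1 ->
  exists p : (A * A)%type, [/\ mc_d y0 (io true p.1) = 0, dM p.1 p.2 = 0
    & mc_d (io false p.2) y1 = 0].
Proof.
move=> /qpiP /andP [/eqP h _].
move: h; rewrite /delta min_r /= ?leey // => h.
have lG : lsc (fun p : (A * A)%type => Fc (existT XT true y0) (existT XT false y1) p).
  move=> u; have := lsc_comp (F := fun w : ((XS * XS) * (A * A))%type => Fc w.1.1 w.1.2 w.2)
    (g := fun p : (A * A)%type => ((existT XT true y0, existT XT false y1), p))
    (cont_pair (@cst_continuous _ _ _) (fun p => cvg_id)) Fc_lsc u.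
  by [].
have cAA : compact [set: (A * A)%type].
  by rewrite -setXTT; apply: compact_setX; exact: mc_compact.
have [p hp] := inf_attained cAA (@Fc_ge0 _ _) lG h.
exists p; move: hp; rewrite /Fc => /eqP.
rewrite padde_eq0 ?adde_ge0 ?dL_ge0 ?dM_ge0 ?dR_ge0 //.
by case/andP => /eqP /eqP; rewrite padde_eq0 ?dL_ge0 ?dM_ge0 // => /andP[/eqP h1 /eqP h2] /eqP h3.
Qed.

End PO.
Theorem corollary4p7 (R : realType) (A B C P : MetCH R)
    (m : A -> B) (f : A -> C) (f' : B -> P) (m' : C -> P) :
  regular_mono m -> is_hom f -> is_pushout m f f' m' -> regular_mono m'.
Proof.
move=> rm _ [hm [hf [hf' [hm' [comm univ]]]]].
have [minj miso] := reg_props rm.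
have m'iso : forall c1 c2, mc_d (m' c1) (m' c2) = mc_d c1 c2.
  pose Y := fun i : bool => if i then B else C.
  pose io := fun i : bool => if i return (A -> Y i) then m else f.
  have ioc : forall i, continuous (io i).
    by case; [exact: hom_cont hm|exact: hom_cont hf].
  have Hio : forall a a', mc_d (io false a) (io false a') <= mc_d (io true a) (io true a').
    by move=> a a' /=; rewrite miso; exact: (@hom_le R A C f hf a a').
  pose p : B -> QPO ioc Hio := fun b => @inj _ _ _ _ ioc Hio true b.
  pose q : C -> QPO ioc Hio := fun c => @inj _ _ _ _ ioc Hio false c.
  have hp : is_hom p := inj_hom ioc Hio true.
  have hq : is_hom q := inj_hom ioc Hio false.
  have pq : p \o m = q \o f by apply: funext => a; exact: glue ioc Hio a.
  have [u [hu uf' um' _]] := univ _ p q hp hq pq.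
  have e : forall c, u (m' c) = q c by move=> c; have := congr1 (fun F => F c) um'.
  move=> c1 c2; apply/eqP; rewrite eq_le (hom_le hm') /=.
  have H := hom_le hu (m' c1) (m' c2).
  by rewrite !e /q inj_false_d in H.
have m'inj : forall c1 c2, m' c1 = m' c2 -> c1 = c2.
  move=> c1 c2 e; apply: mc_d_sep; rewrite -m'iso e mc_d_refl //.
pose Y2 := fun _ : bool => P.
pose io2 := fun i : bool => (m' : C -> Y2 i).
have ioc2 : forall i, continuous (io2 i) by move=> i; exact: hom_cont hm'.
have Hio2 : forall a a', mc_d (io2 false a) (io2 false a') <= mc_d (io2 true a) (io2 true a').
  by move=> *; exact: lexx.
exists (QPO ioc2 Hio2), (@inj _ _ _ _ ioc2 Hio2 true), (@inj _ _ _ _ ioc2 Hio2 false).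
split; first exact: hm'.
split; first exact: (inj_hom ioc2 Hio2 true).
split; first exact: (inj_hom ioc2 Hio2 false).
split; first by apply: funext => c; exact: glue ioc2 Hio2 c.
move=> Z k hk gk.
have ex : forall z, exists c, k z = m' c.
  move=> z; have := congr1 (fun F => F z) gk => /= /inj_tf [[a a'] [h1 h2 h3]].
  rewrite /dM /= in h2; simpl in h1, h3.
  exists a'; apply: mc_d_sep => //.
  apply: le0_eq0; first exact: mc_d_ge0.
  by apply: (le_trans (mc_d_triangle _ (m' a) _)); rewrite h1 h2 adde0.
pose u := fun z => projT1 (cid (ex z)).
have ku : forall z, k z = m' (u z) := fun z => projT2 (cid (ex z)).
exists u; split.
- split.
    apply/continuous_closedP => S cS.
    have -> : u @^-1` S = k @^-1` (m' @` S).
      apply/seteqP; split => z /=; first by move=> Su; exists (u z).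
      by case=> c Sc ec; rewrite -(m'inj _ _ (etrans ec (ku z))).
    apply: (proj1 (continuous_closedP k) (hom_cont hk)).
    apply: compact_closed; first exact: mc_hausdorff.
    apply: continuous_compact; first exact/continuous_subspaceT/(hom_cont hm').
    exact: (subclosed_compact cS (@mc_compact R C)).
  move=> z z'; rewrite -m'iso -!ku; exact: (@hom_le R Z P k hk z z').
- by apply: funext => z /=; rewrite -ku.
- move=> v hv mv; apply: funext => z; apply: m'inj; rewrite -ku.
  by have := congr1 (fun F => F z) mv.
Qed.
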